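(* Let $0\le\Delta'\le\Delta\le1/8$ with $\Delta>0$, let $\xi\ge100$ be such that $m=\Delta^{-2}/\xi$ is a positive integer, let $\mathcal{D}=\mathcal{B}(1/2+\Delta)^{\otimes m}$ and $\mathcal{D}'=\mathcal{B}(1/2+\Delta')^{\otimes m}$, where $\mathcal{B}(\mu)$ is the Bernoulli distribution with mean $\mu$. Let $\mathcal{X}$ be any probability distribution on a sample space $X$. Then for any event $A\subseteq\{0,1\}^m\times X$ with $\Pr_{\mathcal{D}\otimes\mathcal{X}}[A]\le\gamma$, and any $Q\ge\xi$, $$\Pr_{\mathcal{D}'\otimes\mathcal{X}}[A]\le\gamma\cdot\exp\!\left(5\sqrt{(3\ln Q)/\xi}\right)+Q^{-6}.$$ *)

(* Defs.v *)
From Stdlib Require Import Reals List.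
Import ListNotations.
Open Scope R_scope.
Set Implicit Arguments.

Fixpoint bitvecs (m : nat) : list (list bool) :=
  match m with
  | O => [nil]
  | S k => map (cons false) (bitvecs k) ++ map (cons true) (bitvecs k)
  end.

Definition bern (mu : R) (b : bool) : R := if b then mu else 1 - mu.

Fixpoint bern_prod (mu : R) (s : list bool) : R :=
  match s with
  | nil => 1
  | b :: s' => bern mu b * bern_prod mu s'
  end.

Record ProbSpace (X : Type) := {
  meas : (X -> Prop) -> Prop;
  P : (X -> Prop) -> R;
  meas_full : meas (fun _ => True);
  meas_compl : forall E, meas E -> meas (fun x => ~ E x);
  meas_union : forall F : nat -> X -> Prop,
      (forall n, meas (F n)) -> meas (fun x => exists n, F n x);
  P_nonneg : forall E, meas E -> 0 <= P E;
  P_full : P (fun _ => True) = 1;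
  P_sigma_additive : forall F : nat -> X -> Prop,
      (forall n, meas (F n)) ->
      (forall i j x, i <> j -> F i x -> F j x -> False) ->
      infinite_sum (fun n => P (F n)) (P (fun x => exists n, F n x))
}.

(* A is given by its sections A b ⊆ X (b ∈ {0,1}^m); since {0,1}^m is finite
   and discrete, A is measurable in the product iff every section is, and the
   product measure is  sum_b Pr_{B(mu)^m}[b] * PX(A_b). *)
Definition prod_prob (X : Type) (m : nat) (mu : R) (PX : ProbSpace X)
  (A : list bool -> X -> Prop) : R :=
  fold_right Rplus 0 (map (fun b => bern_prod mu b * P PX (A b)) (bitvecs m)).

(* Main.v *)
Require Import Defs.
From Stdlib Require Import Reals List.
From Stdlib Require Import Lra Classical FunctionalExtensionality PropExtensionality.
From Coquelicot Require Import Coquelicot.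
Open Scope R_scope.

Section H.
Variable p : R.
Hypothesis hp0 : 0 <= p. Hypothesis hp1 : p <= 1.
Lemma pos_den x : 0 < 1 - p + p * exp x.
Proof. pose proof (exp_pos x). nra. Qed.
Definition g x := ln (1 - p + p * exp x) - p * x - x ^ 2 / 8.
Definition g1 x := p * exp x / (1 - p + p * exp x) - p - x / 4.
Definition g2 x := p * (1 - p) * exp x / (1 - p + p * exp x) ^ 2 - 1 / 4.
Lemma dg x : is_derive g x (g1 x).
Proof. unfold g, g1. pose proof (pos_den x). auto_derive. lra.
 field. lra. Qed.
Lemma dg1 x : is_derive g1 x (g2 x).
Proof. unfold g1, g2. pose proof (pos_den x). auto_derive. lra.
 field. lra. Qed.
Lemma g2_le x : g2 x <= 0.
Proof. unfold g2. pose proof (pos_den x). pose proof (exp_pos x).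
 set (D := 1 - p + p * exp x) in *.
 assert (p * (1 - p) * exp x / D ^ 2 <= 1/4); [|lra].
 assert (HD : 0 < D ^ 2) by nra.
 assert (p * (1 - p) * exp x <= 1/4 * D ^ 2) by (unfold D; pose proof (pow2_ge_0 (1 - p - p * exp x)); nra).
 apply Rmult_le_reg_r with (D^2). exact HD.
 unfold Rdiv. rewrite Rmult_assoc, Rinv_l by lra. lra. Qed.
Lemma g1_0 : g1 0 = 0.
Proof. unfold g1. rewrite exp_0. field. lra. Qed.
Lemma g_0 : g 0 = 0.
Proof. unfold g. rewrite exp_0. replace (1 - p + p * 1) with 1 by ring. rewrite ln_1. unfold g; simpl; lra. Qed.
Lemma g1_pos x : x <= 0 -> 0 <= g1 x.
Proof. intros hx. destruct (Req_dec x 0) as [->|hne]. rewrite g1_0; lra.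
 destruct (MVT_cor2 g1 g2 x 0) as [c [hc _]]. lra.
 intros c _. apply is_derive_Reals, dg1.
 rewrite g1_0 in hc. pose proof (g2_le c). nra. Qed.
Lemma g1_neg x : 0 <= x -> g1 x <= 0.
Proof. intros hx. destruct (Req_dec x 0) as [->|hne]. rewrite g1_0; lra.
 destruct (MVT_cor2 g1 g2 0 x) as [c [hc _]]. lra.
 intros c _. apply is_derive_Reals, dg1.
 rewrite g1_0 in hc. pose proof (g2_le c). nra. Qed.
Lemma g_le x : g x <= 0.
Proof. destruct (Rtotal_order x 0) as [h|[->|h]].
 - destruct (MVT_cor2 g g1 x 0) as [c [hc hc']]. lra.
   intros c _. apply is_derive_Reals, dg.
   rewrite g_0 in hc. pose proof (g1_pos c). nra.
 - rewrite g_0; lra.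
 - destruct (MVT_cor2 g g1 0 x) as [c [hc hc']]. lra.
   intros c _. apply is_derive_Reals, dg.
   rewrite g_0 in hc. pose proof (g1_neg c). nra.
Qed.
End H.
Lemma hoeff p y z : 0 <= p -> p <= 1 ->
  p * exp y + (1 - p) * exp z <= exp (p * y + (1 - p) * z + (y - z) ^ 2 / 8).
Proof. intros h0 h1. pose proof (g_le p h0 h1 (y - z)) as H. unfold g in H.
 pose proof (pos_den p h0 h1 (y - z)) as Hd.
 assert (ln (1 - p + p * exp (y - z)) <= p * (y - z) + (y - z) ^ 2 / 8) by lra.
 assert (HH : 1 - p + p * exp (y - z) <= exp (p * (y - z) + (y - z) ^ 2 / 8)).
 { rewrite <- (exp_ln (1 - p + p * exp (y - z))) by exact Hd.
   destruct (Rle_lt_or_eq_dec _ _ H0) as [h|h]; [left; apply exp_increasing; exact h| rewrite h; lra]. }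
 assert (Ey : exp y = exp z * exp (y - z)) by (rewrite <- exp_plus; f_equal; ring).
 assert (Ez : exp (p * y + (1 - p) * z + (y - z) ^ 2 / 8) = exp z * exp (p * (y - z) + (y - z) ^ 2 / 8))
   by (rewrite <- exp_plus; f_equal; ring).
 rewrite Ey, Ez. pose proof (exp_pos z).
 assert (p * (exp z * exp (y - z)) + (1 - p) * exp z = exp z * (1 - p + p * exp (y - z))) as -> by ring.
 apply Rmult_le_compat_l; lra.
Qed.

Lemma ln_le_sub1 x : 0 < x -> ln x <= x - 1.
Proof. intros hx. pose proof (exp_ineq1_le (ln x)). rewrite exp_ln in H by exact hx. lra. Qed.

Lemma ln_ge_1inv x : 0 < x -> 1 - / x <= ln x.
Proof. intros hx. pose proof (ln_le_sub1 (/ x) (Rinv_0_lt_compat _ hx)).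
 rewrite ln_Rinv in H by exact hx. lra. Qed.

Lemma exp_pow_n x n : exp x ^ n = exp (INR n * x).
Proof. induction n. simpl. rewrite Rmult_0_l, exp_0. reflexivity.
 rewrite S_INR. simpl. rewrite IHn, <- exp_plus. f_equal. ring. Qed.

Definition sumL (l : list R) := fold_right Rplus 0 l.

Lemma sumL_app l1 l2 : sumL (l1 ++ l2) = sumL l1 + sumL l2.
Proof. induction l1; simpl. ring. unfold sumL in *. simpl. rewrite IHl1. ring. Qed.

Lemma sumL_le {T} (f g : T -> R) l : (forall x, f x <= g x) -> sumL (map f l) <= sumL (map g l).
Proof. intros H. induction l; simpl. lra. pose proof (H a). unfold sumL in *. simpl. lra. Qed.

Lemma sumL_plus {T} (f g : T -> R) l : sumL (map (fun x => f x + g x) l) = sumL (map f l) + sumL (map g l).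
Proof. induction l; simpl. unfold sumL; simpl; ring. unfold sumL in *; simpl. rewrite IHl. ring. Qed.

Lemma sumL_scal {T} (f : T -> R) c l : sumL (map (fun x => c * f x) l) = c * sumL (map f l).
Proof. induction l; simpl. unfold sumL; simpl; ring. unfold sumL in *; simpl. rewrite IHl. ring. Qed.

Lemma P_bounds X (PX : ProbSpace X) E : meas PX E -> 0 <= P PX E <= 1.
Proof.
 intros hE. split. apply P_nonneg; exact hE.
 set (F := fun n : nat => match n with 0%nat => E | 1%nat => fun x => ~ E x | _ => fun _ => ~ True end).
 assert (hm : forall n, meas PX (F n)).
 { intros [|[|n]]; simpl. exact hE. apply meas_compl; exact hE. apply meas_compl, meas_full. }
 assert (hd : forall i j x, i <> j -> F i x -> F j x -> False).
 { intros [|[|i]] [|[|j]] x hij; simpl; tauto. }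
 pose proof (P_sigma_additive PX F hm hd) as hs.
 assert (hU : (fun x => exists n, F n x) = (fun _ => True)).
 { apply functional_extensionality. intros x. apply propositional_extensionality.
   split; [tauto|]. intros _. destruct (classic (E x)). exists 0%nat; exact H. exists 1%nat; exact H. }
 rewrite hU, P_full in hs.
 assert (hg : Un_growing (sum_f_R0 (fun n => P PX (F n)))).
 { intros n. cbn [sum_f_R0]. pose proof (P_nonneg PX (F (S n)) (hm (S n))). lra. }
 pose proof (growing_ineq _ _ hg hs 1%nat) as H1. cbn [sum_f_R0] in H1.
 pose proof (P_nonneg PX _ (hm 1%nat)). cbn [sum_f_R0] in H1. change (P PX E + P PX (F 1%nat) <= 1) in H1. lra.
Qed.

Section Comb.
Variables q q' s : R.
Hypothesis hq0 : 0 < q. Hypothesis hq1 : q < 1.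
Hypothesis hq0' : 0 < q'. Hypothesis hq1' : q' < 1.

Lemma bern_pos mu b : 0 < mu -> mu < 1 -> 0 < bern mu b.
Proof. destruct b; simpl; lra. Qed.

Lemma bern_prod_pos mu l : 0 < mu -> mu < 1 -> 0 < bern_prod mu l.
Proof. intros. induction l; simpl. lra. pose proof (bern_pos mu a H H0). nra. Qed.

Definition w (b : bool) := bern q' b * exp (s * ln (bern q' b / bern q b)).
Fixpoint Wp (l : list bool) : R := match l with nil => 1 | x :: l' => w x * Wp l' end.

Lemma Wp_eq l : Wp l = bern_prod q' l * exp (s * ln (bern_prod q' l / bern_prod q l)).
Proof.
 induction l as [|x l IH]; simpl.
 - replace (1/1) with 1 by field. rewrite ln_1, Rmult_0_r, exp_0. ring.
 - rewrite IH. unfold w.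
   pose proof (bern_pos q x hq0 hq1). pose proof (bern_pos q' x hq0' hq1').
   pose proof (bern_prod_pos q l hq0 hq1). pose proof (bern_prod_pos q' l hq0' hq1').
   replace (bern q' x * bern_prod q' l / (bern q x * bern_prod q l))
     with (bern q' x / bern q x * (bern_prod q' l / bern_prod q l)) by (field; lra).
   rewrite ln_mult. rewrite Rmult_plus_distr_l, exp_plus. ring.
   apply Rdiv_lt_0_compat; lra. apply Rdiv_lt_0_compat; lra.
Qed.

Lemma sum_Wp m : sumL (map Wp (bitvecs m)) = (w false + w true) ^ m.
Proof.
 induction m; simpl. unfold sumL; simpl; ring.
 rewrite map_app, sumL_app, !map_map. simpl.
 rewrite (sumL_scal Wp (w false)), (sumL_scal Wp (w true)), IHm. ring.
Qed.
End Comb.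

Lemma pointwise (d d' p T c s : R) : 0 < d -> 0 < d' -> 0 <= p <= 1 -> 0 <= s -> T = exp c ->
  d' * p <= T * (d * p) + exp (- s * c) * (d' * exp (s * ln (d' / d))).
Proof.
 intros hd hd' hp hs hT.
 assert (h0 : 0 <= exp (- s * c) * (d' * exp (s * ln (d' / d)))).
 { pose proof (exp_pos (- s * c)). pose proof (exp_pos (s * ln (d'/d))). apply Rmult_le_pos; [lra|]. apply Rmult_le_pos; lra. }
 destruct (Rle_or_lt d' (T * d)) as [h|h].
 - assert (d' * p <= T * d * p) by nra. lra.
 - assert (hc : c < ln (d' / d)).
   { rewrite <- (ln_exp c). apply ln_increasing. apply exp_pos.
     rewrite <- hT. apply Rmult_lt_reg_r with d. exact hd. unfold Rdiv.
     rewrite Rmult_assoc, Rinv_l by lra. lra. }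
   assert (h1 : 1 <= exp (- s * c) * exp (s * ln (d' / d))).
   { rewrite <- exp_plus. rewrite <- exp_0. destruct (Req_dec s 0) as [->|hs0].
     replace (-0*c + 0 * ln (d'/d)) with 0 by ring. lra.
     left. apply exp_increasing. nra. }
   assert (0 <= T * (d * p)). { rewrite hT. pose proof (exp_pos c). apply Rmult_le_pos; [lra|]. apply Rmult_le_pos; lra. }
   set (K := exp (- s * c)) in *. set (Z := exp (s * ln (d' / d))) in *. assert (d' * p <= d' * (K * Z)) by nra. lra.
Qed.

Theorem mainTheorem11 (Delta Delta' xi gamma Q : R) (m : nat) (X : Type)
  (PX : ProbSpace X) (A : list bool -> X -> Prop) :
  0 <= Delta' -> Delta' <= Delta -> 0 < Delta -> Delta <= 1/8 ->
  100 <= xi -> (0 < m)%nat -> INR m = / (Delta ^ 2) / xi ->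
  (forall b, In b (bitvecs m) -> meas PX (A b)) ->
  prod_prob m (1/2 + Delta) PX A <= gamma ->
  xi <= Q ->
  prod_prob m (1/2 + Delta') PX A
    <= gamma * exp (5 * sqrt (3 * ln Q / xi)) + / (Q ^ 6).
Proof.
 intros h1 h2 h3 h4 h5 h6 hm hmeas hg hQ.
 set (q := 1/2 + Delta). set (q' := 1/2 + Delta').
 set (L := ln Q). set (c := 5 * sqrt (3 * L / xi)). set (T := exp c).
 assert (hL : 1 < L).
 { unfold L. rewrite <- (ln_exp 1). apply ln_increasing. apply exp_pos. pose proof exp_le_3. lra. }
 assert (hsq : sqrt (3 * L / xi) * sqrt (3 * L / xi) = 3 * L / xi).
 { apply sqrt_sqrt. apply Rlt_le, Rdiv_lt_0_compat; lra. }
 assert (hsqp : 0 < sqrt (3 * L / xi)). { apply sqrt_lt_R0, Rdiv_lt_0_compat; lra. }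
 assert (hc : 0 < c) by (unfold c; lra).
 assert (hc2 : c * c * xi = 75 * L).
 { unfold c. replace (5 * sqrt (3 * L / xi) * (5 * sqrt (3 * L / xi)) * xi)
     with (25 * (sqrt (3 * L / xi) * sqrt (3 * L / xi)) * xi) by ring.
   rewrite hsq. field. lra. }
 assert (hcxi : 85 <= c * xi) by nra.
 set (s := 12 * L / c).
 assert (hs : 0 <= s) by (unfold s; apply Rlt_le, Rdiv_lt_0_compat; lra).
 assert (hq0 : 0 < q) by (unfold q; lra). assert (hq1 : q < 1) by (unfold q; lra).
 assert (hq0' : 0 < q') by (unfold q'; lra). assert (hq1' : q' < 1) by (unfold q'; lra).
 assert (hsum : prod_prob m q' PX A <= T * prod_prob m q PX A
                  + exp (- s * c) * sumL (map (Wp q q' s) (bitvecs m))).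
 { unfold prod_prob. fold sumL.
   rewrite <- sumL_scal, <- sumL_scal, <- sumL_plus.
   assert (Hin : forall l, (forall b, In b l -> meas PX (A b)) ->
      sumL (map (fun b => bern_prod q' b * P PX (A b)) l) <=
      sumL (map (fun x => T * (bern_prod q x * P PX (A x)) + exp (- s * c) * Wp q q' s x) l)).
   { induction l as [|b l IH]; intros Hm. simpl; lra.
     unfold sumL in *. simpl. apply Rplus_le_compat.
     - rewrite Wp_eq by assumption. apply pointwise; auto.
       apply bern_prod_pos; assumption. apply bern_prod_pos; assumption.
       apply P_bounds, Hm; simpl; auto.
     - apply IH. intros; apply Hm; simpl; auto. }
   apply Hin, hmeas. }
 rewrite sum_Wp in hsum by assumption.
 set (u := ln (q' / q)). set (v := ln ((1 - q') / (1 - q))).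
 assert (hf : w q q' s false + w q q' s true = q' * exp (s * u) + (1 - q') * exp (s * v)).
 { unfold w. simpl. fold u v. ring. }
 assert (hu1 : u <= q' / q - 1) by (apply ln_le_sub1, Rdiv_lt_0_compat; lra).
 assert (hu2 : 1 - / (q' / q) <= u) by (apply ln_ge_1inv, Rdiv_lt_0_compat; lra).
 assert (hv1 : v <= (1 - q') / (1 - q) - 1) by (apply ln_le_sub1, Rdiv_lt_0_compat; lra).
 assert (hv2 : 1 - / ((1 - q') / (1 - q)) <= v) by (apply ln_ge_1inv, Rdiv_lt_0_compat; lra).
 assert (e1 : q' / q - 1 = (Delta' - Delta) / q) by (unfold q, q'; field; lra).
 assert (e2 : 1 - / (q' / q) = (Delta' - Delta) / q') by (unfold q, q'; field; lra).
 assert (e3 : (1 - q') / (1 - q) - 1 = (Delta - Delta') / (1 - q)) by (unfold q, q'; field; lra).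
 assert (e4 : 1 - / ((1 - q') / (1 - q)) = (Delta - Delta') / (1 - q')) by (unfold q, q'; field; lra).
 rewrite e1 in hu1. rewrite e2 in hu2. rewrite e3 in hv1. rewrite e4 in hv2.
 assert (hu0 : u <= 0). { assert (0 <= (Delta - Delta') / q) by (apply Rdiv_le_0_compat; lra).
   unfold Rdiv in *. lra. }
 assert (hv0 : 0 <= v). { assert (0 <= (Delta - Delta') / (1 - q')) by (apply Rdiv_le_0_compat; lra). lra. }
 assert (hvb : v <= 8 * Delta / 3).
 { assert ((Delta - Delta') / (1 - q) <= 8 * Delta / 3); [|lra].
   apply Rmult_le_reg_r with (1 - q). lra. unfold Rdiv. rewrite Rmult_assoc, Rinv_l by lra.
   unfold q. nra. }
 assert (hub : - u <= 2 * Delta).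
 { assert ((Delta - Delta') / q' <= 2 * Delta). 2:{ unfold Rdiv in *. lra. }
   apply Rmult_le_reg_r with q'. lra. unfold Rdiv. rewrite Rmult_assoc, Rinv_l by lra.
   unfold q'. nra. }
 assert (hKL : q' * u + (1 - q') * v <= 64 * Delta ^ 2 / 15).
 { assert (q' * u <= q' * ((Delta' - Delta) / q)) by (apply Rmult_le_compat_l; lra).
   assert ((1 - q') * v <= (1 - q') * ((Delta - Delta') / (1 - q))) by (apply Rmult_le_compat_l; lra).
   assert (ek : q' * ((Delta' - Delta) / q) + (1 - q') * ((Delta - Delta') / (1 - q))
                 = (Delta - Delta') ^ 2 / (q * (1 - q))) by (unfold q, q'; field; lra).
   assert ((Delta - Delta') ^ 2 / (q * (1 - q)) <= 64 * Delta ^ 2 / 15).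
   { assert (hqq : 15/64 <= q * (1 - q)) by (unfold q; nra).
     apply Rmult_le_reg_r with (q * (1 - q)). lra. unfold Rdiv. rewrite Rmult_assoc, Rinv_l by lra.
     nra. }
   lra. }
 assert (hW2 : (v - u) ^ 2 <= 196 * Delta ^ 2 / 9) by nra.
 pose proof (hoeff q' (s * u) (s * v) (Rlt_le _ _ hq0') (Rlt_le _ _ hq1')) as hH.
 rewrite <- hf in hH.
 assert (hfpos : 0 <= w q q' s false + w q q' s true).
 { rewrite hf. pose proof (exp_pos (s * u)). pose proof (exp_pos (s * v)). nra. }
 pose proof (pow_incr _ _ m (conj hfpos hH)) as hP. rewrite exp_pow_n in hP.
 set (E1 := q' * (s * u) + (1 - q') * (s * v) + (s * u - s * v) ^ 2 / 8) in *.
 assert (hmD : INR m * Delta ^ 2 * xi = 1) by (rewrite hm; field; lra).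
 assert (hm0 : 0 <= INR m) by apply pos_INR.
 assert (hE : - s * c + INR m * E1 <= - 6 * L).
 { assert (hE1 : E1 <= s * (64 * Delta ^ 2 / 15) + s ^ 2 * (196 * Delta ^ 2 / 9) / 8).
   { unfold E1. replace (q' * (s * u) + (1 - q') * (s * v)) with (s * (q' * u + (1 - q') * v)) by ring.
     replace ((s * u - s * v) ^ 2) with (s ^ 2 * (v - u) ^ 2) by ring.
     assert (s * (q' * u + (1 - q') * v) <= s * (64 * Delta ^ 2 / 15)) by (apply Rmult_le_compat_l; lra).
     assert (s ^ 2 * (v - u) ^ 2 <= s ^ 2 * (196 * Delta ^ 2 / 9)) by (apply Rmult_le_compat_l; nra).
     lra. }
   assert (INR m * E1 <= INR m * (s * (64 * Delta ^ 2 / 15) + s ^ 2 * (196 * Delta ^ 2 / 9) / 8))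
     by (apply Rmult_le_compat_l; lra).
   assert (ex : INR m * (s * (64 * Delta ^ 2 / 15) + s ^ 2 * (196 * Delta ^ 2 / 9) / 8)
                = s * 64 / (15 * xi) + s ^ 2 * 196 / (72 * xi)).
   { apply Rmult_eq_reg_r with xi. 2: lra.
     transitivity ((INR m * Delta ^ 2 * xi) * (s * 64 / 15 + s ^ 2 * 196 / 72)). field.
     rewrite hmD. field. lra. }
   assert (esc : s * c = 12 * L) by (unfold s; field; lra).
   assert (es2 : s ^ 2 * 196 / (72 * xi) = 144 * 196 * L / (75 * 72)).
   { unfold s. replace ((12 * L / c) ^ 2 * 196 / (72 * xi)) with (144 * 196 * L * L / (72 * (c * c * xi))) by (field; split; lra).
     rewrite hc2. field. lra. }
   assert (es1 : s * 64 / (15 * xi) <= 768 * L / (15 * 85)).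
   { unfold s. replace (12 * L / c * 64 / (15 * xi)) with (768 * L / (15 * (c * xi))) by (field; split; lra).
     unfold Rdiv. apply Rmult_le_compat_l. lra. apply Rinv_le_contravar. lra. lra. }
   lra. }
 assert (hQ6 : / Q ^ 6 = exp (- 6 * L)).
 { unfold L. assert (e6 : - 6 * ln Q = - (INR 6 * ln Q)) by (simpl INR; ring).
   rewrite e6, exp_Ropp, <- ln_pow, exp_ln. reflexivity. apply pow_lt; lra. lra. }
 rewrite hQ6. fold c. fold T.
 assert (hT : 0 < T) by apply exp_pos.
 assert (T * prod_prob m q PX A <= gamma * T).
 { rewrite Rmult_comm. apply Rmult_le_compat_r; [lra| exact hg]. }
 assert (exp (- s * c) * (w q q' s false + w q q' s true) ^ m <= exp (- 6 * L)).
 { apply Rle_trans with (exp (- s * c) * exp (INR m * E1)).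
   apply Rmult_le_compat_l. left; apply exp_pos. exact hP.
   rewrite <- exp_plus. destruct (Rle_lt_or_eq_dec _ _ hE) as [h|h].
   left; apply exp_increasing; exact h. rewrite h; lra. }
 lra.
Qed.
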